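(* Let $\Phi$ be an irreducible root system (e.g. that of a simple complex Lie algebra) with Weyl group $W$, highest root $\theta$, and positive roots determined by a Borel subalgebra. If $\alpha\in\Phi$ is a root of the same length as $\theta$, then there is a unique maximal element $w\in W$ in the Bruhat order among those satisfying $w^{-1}\theta=\alpha$.
   Context: The Bruhat order on $W$ is with respect to the simple reflections determined by the choice of positive roots. *)

(* Defs.v *)
From HB Require Import structures.
From mathcomp Require Import all_boot all_order all_algebra.
From mathcomp Require Import reals.
From Stdlib Require Import Relations.
Set Implicit Arguments. Unset Strict Implicit. Unset Printing Implicit Defensive.
Import Order.TTheory GRing.Theory Num.Theory.
Local Open Scope ring_scope.

Section RootSystems.
Variables (R : realType) (n : nat).
Implicit Types (u v a b : 'cV[R]_n) (Phi Delta : seq 'cV[R]_n) (w : 'M[R]_n).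

Definition dot u v : R := (u^T *m v) 0 0.

Definition refl_mx a : 'M[R]_n := 1%:M - (2 / dot a a) *: (a *m a^T).

(* (crystallographic, reduced) root system spanning R^n *)
Definition is_root_system Phi : Prop :=
  [/\ 0 \notin Phi,
      (forall v, exists c : 'cV[R]_n -> R, v = \sum_(a <- Phi) c a *: a),
      (forall a b, a \in Phi -> b \in Phi -> refl_mx a *m b \in Phi),
      (forall a b, a \in Phi -> b \in Phi -> (2 * dot b a / dot a a) \is a Num.int)
    & (forall a (c : R), a \in Phi -> c *: a \in Phi -> c = 1 \/ c = -1)].

Definition irreducible_rs Phi : Prop :=
  forall P : pred 'cV[R]_n,
    (forall a b, a \in Phi -> b \in Phi -> P a -> ~~ P b -> dot a b = 0) ->
    all P Phi \/ all (predC P) Phi.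

Definition nonneg_comb Delta v : Prop :=
  exists c : 'cV[R]_n -> nat, v = \sum_(d <- Delta) (c d)%:R *: d.

Definition is_base Phi Delta : Prop :=
  [/\ uniq Delta, {subset Delta <= Phi},
      (forall c : 'cV[R]_n -> R, \sum_(d <- Delta) c d *: d = 0 ->
          forall d, d \in Delta -> c d = 0)
    & (forall b, b \in Phi -> nonneg_comb Delta b \/ nonneg_comb Delta (- b))].

Definition positive_root Phi Delta b : Prop := b \in Phi /\ nonneg_comb Delta b.

Definition highest_root Phi Delta theta : Prop :=
  theta \in Phi /\ forall b, b \in Phi -> nonneg_comb Delta (theta - b).

Definition word_mx (s : seq 'cV[R]_n) : 'M[R]_n :=
  foldr (fun a M => refl_mx a *m M) 1%:M s.

Definition in_Weyl Phi w : Prop :=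
  exists s : seq 'cV[R]_n, {subset s <= Phi} /\ w = word_mx s.

Definition is_length Delta w (l : nat) : Prop :=
  (exists s, {subset s <= Delta} /\ size s = l /\ w = word_mx s) /\
  (forall s, {subset s <= Delta} -> w = word_mx s -> (l <= size s)%N).

Definition bruhat_step Phi Delta (u w : 'M[R]_n) : Prop :=
  exists b, b \in Phi /\ w = u *m refl_mx b /\
  exists lu lw, [/\ is_length Delta u lu, is_length Delta w lw & (lu < lw)%N].

Definition bruhat_le Phi Delta : relation 'M[R]_n :=
  clos_refl_trans _ (bruhat_step Phi Delta).

End RootSystems.

(* Main.v *)
Require Import Defs.
From HB Require Import structures.
From mathcomp Require Import all_boot all_order all_algebra.
From mathcomp Require Import reals.
From mathcomp Require Import boolp.
From mathcomp Require Import ring lra zify.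
From Stdlib Require Import Relations.
Set Implicit Arguments. Unset Strict Implicit. Unset Printing Implicit Defensive.
Import Order.TTheory GRing.Theory Num.Theory.
Local Open Scope ring_scope.

Section Basic.
Variables (R : realType) (n : nat).
Implicit Types (u v a b x : 'cV[R]_n) (w : 'M[R]_n) (s t : seq 'cV[R]_n).

Lemma mx_ext (A B : 'M[R]_n) : (forall v : 'cV[R]_n, A *m v = B *m v) -> A = B.
Proof.
move=> H; apply/matrixP => i j.
have := congr1 (fun M : 'cV[R]_n => M i 0) (H (delta_mx j 0)).
by rewrite -!colE !mxE.
Qed.

Lemma dotC u v : dot u v = dot v u.
Proof. by rewrite /dot -[in LHS](trmxK (u^T *m v)) trmx_mul trmxK [in LHS]mxE. Qed.

Lemma dotDr u v a : dot u (v + a) = dot u v + dot u a.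
Proof. by rewrite /dot mulmxDr mxE. Qed.
Lemma dotDl u v a : dot (v + a) u = dot v u + dot a u.
Proof. by rewrite dotC dotDr !(dotC u). Qed.
Lemma dotZr u v c : dot u (c *: v) = c * dot u v.
Proof. by rewrite /dot -scalemxAr mxE. Qed.
Lemma dotZl u v c : dot (c *: v) u = c * dot v u.
Proof. by rewrite dotC dotZr dotC. Qed.
Lemma dotNr u v : dot u (- v) = - dot u v.
Proof. by rewrite -scaleN1r dotZr mulN1r. Qed.
Lemma dotNl u v : dot (- v) u = - dot v u.
Proof. by rewrite dotC dotNr dotC. Qed.
Lemma dotBr u v a : dot u (v - a) = dot u v - dot u a.
Proof. by rewrite dotDr dotNr. Qed.
Lemma dotBl u v a : dot (v - a) u = dot v u - dot a u.
Proof. by rewrite dotDl dotNl. Qed.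
Lemma dot_mul w u v : dot (w *m u) v = dot u (w^T *m v).
Proof. by rewrite /dot trmx_mul mulmxA. Qed.
Lemma dot_mulr w u v : dot u (w *m v) = dot (w^T *m u) v.
Proof. by rewrite dot_mul trmxK. Qed.
Lemma dot0r u : dot u 0 = 0.
Proof. by rewrite /dot mulmx0 mxE. Qed.
Lemma dot0l u : dot 0 u = 0.
Proof. by rewrite dotC dot0r. Qed.

Lemma dotE u v : dot u v = \sum_i u i 0 * v i 0.
Proof. by rewrite /dot mxE; apply: eq_bigr => i _; rewrite mxE. Qed.

Lemma dot_ge0 u : 0 <= dot u u.
Proof. by rewrite dotE sumr_ge0 // => i _; rewrite -expr2 sqr_ge0. Qed.

Lemma dot_eq0 u : dot u u = 0 -> u = 0.
Proof.
rewrite dotE => H; apply/matrixP => i j; rewrite (ord1 j) mxE.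
have H1 : forall k : 'I_n, predT k -> 0 <= u k 0 * u k 0.
  by move=> k _; rewrite -expr2 sqr_ge0.
have := psumr_eq0P H1 H (i := i) isT.
by move/eqP; rewrite mulf_eq0 orbb => /eqP.
Qed.

Lemma dot_gt0 u : u != 0 -> 0 < dot u u.
Proof.
move=> u0; rewrite lt_def dot_ge0 andbT; apply/eqP => /dot_eq0 H.
by rewrite H eqxx in u0.
Qed.

Lemma refl_act a v : refl_mx a *m v = v - (2 * dot v a / dot a a) *: a.
Proof.
rewrite /refl_mx mulmxBl mul1mx -scalemxAl -mulmxA [a^T *m v]mx11_scalar.
rewrite mul_mx_scalar scalerA; congr (_ - _ *: _).
by rewrite -/(dot a v) dotC mulrAC mulrC.
Qed.


Lemma refl_tr a : (refl_mx a)^T = refl_mx a.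
Proof. by rewrite /refl_mx linearB /= trmx1 linearZ /= trmx_mul trmxK. Qed.

Lemma refl_invol a : a != 0 -> refl_mx a *m refl_mx a = 1%:M.
Proof.
move=> a0; apply: mx_ext => v; rewrite -mulmxA mul1mx !refl_act dotBl dotZl.
have d0 : dot a a != 0 by rewrite gt_eqF // dot_gt0.
set c := 2 * dot v a / dot a a.
have -> : 2 * (dot v a - c * dot a a) / dot a a = - c.
  by rewrite /c; field.
by rewrite scaleNr opprK subrK.
Qed.

Lemma refl_N a : refl_mx (- a) = refl_mx a.
Proof.
apply: mx_ext => v; rewrite !refl_act dotNr dotNl dotNr opprK.
by rewrite mulrN mulNr scaleNr scalerN opprK.
Qed.

Lemma refl_self a : a != 0 -> refl_mx a *m a = - a.
Proof.
move=> a0; rewrite refl_act.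
have d0 : dot a a != 0 by rewrite gt_eqF // dot_gt0.
have -> : 2 * dot a a / dot a a = 2 by rewrite mulfK.
by rewrite scaler_nat mulr2n opprD addrA subrr add0r.
Qed.

Lemma refl_conj (u : 'M[R]_n) a : u^T *m u = 1%:M -> u *m u^T = 1%:M ->
  refl_mx (u *m a) = u *m refl_mx a *m u^T.
Proof.
move=> H1 H2; apply: mx_ext => v.
rewrite -!mulmxA !refl_act mulmxBr mulmxA H2 mul1mx -scalemxAr.
by rewrite [dot v _]dot_mulr [dot (u *m a) _]dot_mul mulmxA H1 mul1mx.
Qed.

Lemma word_cons x s : word_mx (x :: s) = refl_mx x *m word_mx s.
Proof. by []. Qed.

Lemma word_nil : word_mx (n:=n) (R:=R) [::] = 1%:M.
Proof. by []. Qed.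

Lemma word_cat s t : word_mx (s ++ t) = word_mx s *m word_mx t.
Proof.
elim: s => [|x s IH]; first by rewrite word_nil mul1mx.
by rewrite !word_cons IH mulmxA.
Qed.

Lemma word_rcons s x : word_mx (rcons s x) = word_mx s *m refl_mx x.
Proof. by rewrite -cats1 word_cat word_cons word_nil mulmx1. Qed.

Lemma word_tr s : (word_mx s)^T = word_mx (rev s).
Proof.
elim: s => [|x s IH]; first by rewrite word_nil trmx1.
by rewrite word_cons trmx_mul IH refl_tr rev_cons word_rcons.
Qed.

Lemma word_orth s : (forall x, x \in s -> x != 0) ->
  (word_mx s)^T *m word_mx s = 1%:M /\ word_mx s *m (word_mx s)^T = 1%:M.
Proof.
elim: s => [|x s IH] H; first by rewrite word_nil trmx1 mul1mx.
have [H1 H2] := IH (fun y ys => H y (mem_behead (s := x :: s) ys)).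
have x0 := H x (mem_head _ _).
rewrite word_cons trmx_mul refl_tr; split.
  by rewrite -mulmxA (mulmxA (refl_mx x)) refl_invol // mul1mx.
by rewrite mulmxA -(mulmxA _ (word_mx s)) H2 mulmx1 refl_invol.
Qed.

End Basic.

Section RS.
Variables (R : realType) (n : nat) (Phi Delta : seq 'cV[R]_n).
Hypothesis HR : is_root_system Phi.
Hypothesis HB : is_base Phi Delta.
Implicit Types (u v a b x d g : 'cV[R]_n) (w : 'M[R]_n) (s t : seq 'cV[R]_n).

Lemma root_ne0 a : a \in Phi -> a != 0.
Proof. by case: HR => H0 _ _ _ _ aP; apply: contraNneq H0 => <-. Qed.

Lemma refl_root a b : a \in Phi -> b \in Phi -> refl_mx a *m b \in Phi.
Proof. by case: HR => _ _ H _ _; apply: H. Qed.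

Lemma neg_root a : a \in Phi -> - a \in Phi.
Proof. by move=> aP; rewrite -refl_self ?root_ne0 // refl_root. Qed.

Lemma Delta_sub d : d \in Delta -> d \in Phi.
Proof. by case: HB => _ H _ _; apply: H. Qed.

Lemma Delta_uniq : uniq Delta.
Proof. by case: HB. Qed.

Definition pos v : bool := `[< nonneg_comb Delta v >].

Lemma posP v : reflect (nonneg_comb Delta v) (pos v).
Proof. exact: asboolP. Qed.

Lemma uniq_coef (c c' : 'cV[R]_n -> R) :
  \sum_(d <- Delta) c d *: d = \sum_(d <- Delta) c' d *: d ->
  forall d, d \in Delta -> c d = c' d.
Proof.
move=> E d dD; case: HB => _ _ Hli _.
have H0 : \sum_(e <- Delta) (c e - c' e) *: e = 0.
  by rewrite (eq_bigr (fun e => c e *: e - c' e *: e)) ?sumrB ?E ?subrr // => e _; rewrite scalerBl.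
by have /eqP := Hli (fun e => c e - c' e) H0 d dD; rewrite subr_eq0 => /eqP.
Qed.

Lemma sum_single (f : 'cV[R]_n -> R) d : d \in Delta ->
  (forall e, e \in Delta -> e != d -> f e = 0) ->
  \sum_(e <- Delta) f e *: e = f d *: d.
Proof.
move=> dD H; rewrite (bigD1_seq d) //= ?Delta_uniq // big_seq_cond big1 ?addr0 //.
by move=> e /andP[eD ed]; rewrite H // scale0r.
Qed.

Lemma pos_neg_excl v : v != 0 -> pos v -> pos (- v) -> False.
Proof.
move=> v0 /posP[c Ec] /posP[c' Ec'].
have E : \sum_(d <- Delta) ((c d + c' d)%N)%:R *: d = \sum_(d <- Delta) 0 *: d.
  rewrite (eq_bigr (fun d => (c d)%:R *: d + (c' d)%:R *: d)); last first.
    by move=> d _; rewrite natrD scalerDl.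
  by rewrite big_split /= -Ec -Ec' subrr big1 // => d _; rewrite scale0r.
have Hc : forall d, d \in Delta -> c d = 0%N.
  move=> d dD; have := uniq_coef E dD; move/eqP; rewrite pnatr_eq0 addn_eq0.
  by case/andP => /eqP.
move/negP: v0; apply; apply/eqP; rewrite Ec big_seq big1 // => d dD.
by rewrite Hc // scale0r.
Qed.

Lemma root_dich a : a \in Phi -> pos a || pos (- a).
Proof.
move=> aP; case: HB => _ _ _ /(_ a aP) [] H; apply/orP; [left|right]; exact/posP.
Qed.

Lemma root_neg a : a \in Phi -> pos a -> ~~ pos (- a).
Proof. by move=> aP pa; apply/negP => pna; apply: pos_neg_excl (root_ne0 aP) pa pna. Qed.

Lemma root_notpos a : a \in Phi -> ~~ pos a -> pos (- a).
Proof. by move=> aP; case/orP: (root_dich aP) => ->. Qed.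

Lemma pos_Delta d : d \in Delta -> pos d.
Proof.
move=> dD; apply/posP; exists (fun e => nat_of_bool (e == d)).
rewrite (@sum_single (fun e => (nat_of_bool (e == d))%:R) d) //= ?eqxx ?scale1r //.
by move=> e _ /negPf ->.
Qed.

Lemma pos0 : pos 0.
Proof. by apply/posP; exists (fun _ => 0%N); rewrite big1 // => d _; rewrite scale0r. Qed.

Lemma posD u v : pos u -> pos v -> pos (u + v).
Proof.
move=> /posP[c Ec] /posP[c' Ec']; apply/posP; exists (fun d => (c d + c' d)%N).
by rewrite Ec Ec' -big_split /=; apply: eq_bigr => d _; rewrite natrD scalerDl.
Qed.

Lemma posZ (m : nat) u : pos u -> pos (m%:R *: u).
Proof.
move=> /posP[c Ec]; apply/posP; exists (fun d => (m * c d)%N).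
by rewrite Ec scaler_sumr; apply: eq_bigr => d _; rewrite natrM scalerA.
Qed.

Lemma pos_sum (I : eqType) (r : seq I) (F : I -> 'cV[R]_n) :
  (forall i, i \in r -> pos (F i)) -> pos (\sum_(i <- r) F i).
Proof.
move=> H; rewrite big_seq; apply: (big_ind pos) => //; [exact: pos0|exact: posD].
Qed.

Lemma simple_perm b g : b \in Delta -> g \in Phi -> pos g -> g != b ->
  pos (refl_mx b *m g).
Proof.
move=> bD gP pg gb.
have bP := Delta_sub bD.
have sgP := refl_root bP gP.
case/orP: (root_dich sgP) => // /posP[e Ee].
case/posP: pg => c Ec.
set k := 2 * dot g b / dot b b.
have Hs : refl_mx b *m g = g - k *: b by rewrite refl_act.
have E : \sum_(d <- Delta) ((c d + e d)%N)%:R *: d =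
         \sum_(d <- Delta) (if d == b then k else 0) *: d.
  rewrite (@sum_single (fun d => if d == b then k else 0) b) ?eqxx //; last first.
    by move=> d _ /negPf ->.
  rewrite (eq_bigr (fun d => (c d)%:R *: d + (e d)%:R *: d)); last first.
    by move=> d _; rewrite natrD scalerDl.
  by rewrite big_split /= -Ec -Ee Hs opprB addrCA subrr addr0.
have Hc : forall d, d \in Delta -> d != b -> c d = 0%N.
  move=> d dD db; have := uniq_coef E dD; rewrite (negPf db); move/eqP.
  by rewrite pnatr_eq0 addn_eq0 => /andP[/eqP].
have gE : g = (c b)%:R *: b.
  by rewrite Ec (@sum_single (fun d => (c d)%:R) b) // => d dD db; rewrite Hc.
case: HR => _ _ _ _ Hred.
have := Hred b (c b)%:R bP; rewrite -gE => /(_ gP) [] Hcb.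
  by move: gb; rewrite gE Hcb scale1r eqxx.
have : (0 : R) <= (c b)%:R by apply: ler0n.
by rewrite Hcb ler0N1.
Qed.

Lemma simple_neg b g : b \in Delta -> g \in Phi -> pos g ->
  ~~ pos (refl_mx b *m g) -> g = b.
Proof.
move=> bD gP pg npg; apply/eqP; apply: contraNT npg => gb; exact: simple_perm.
Qed.


Lemma word_root s a : {subset s <= Phi} -> a \in Phi -> word_mx s *m a \in Phi.
Proof.
elim: s => [|x s IH] sP aP; first by rewrite word_nil mul1mx.
rewrite word_cons -mulmxA; apply: refl_root; first by apply: sP; rewrite mem_head.
by apply: IH => // y ys; apply: sP; rewrite in_cons ys orbT.
Qed.

Lemma word_orthP s : {subset s <= Phi} ->
  (word_mx s)^T *m word_mx s = 1%:M /\ word_mx s *m (word_mx s)^T = 1%:M.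
Proof. by move=> sP; apply: word_orth => y /sP; apply: root_ne0. Qed.

Lemma inW_tr w : in_Weyl Phi w -> in_Weyl Phi w^T.
Proof.
by case=> s [sP ->]; exists (rev s); split; [move=> y; rewrite mem_rev; apply: sP | rewrite word_tr].
Qed.

Lemma inW_mul w1 w2 : in_Weyl Phi w1 -> in_Weyl Phi w2 -> in_Weyl Phi (w1 *m w2).
Proof.
case=> s [sP ->] [t [tP ->]]; exists (s ++ t); split; last by rewrite word_cat.
by move=> y; rewrite mem_cat => /orP[/sP|/tP].
Qed.

Lemma inW_refl a : a \in Phi -> in_Weyl Phi (refl_mx a).
Proof.
move=> aP; exists [:: a]; split; first by move=> y; rewrite inE => /eqP ->.
by rewrite word_cons word_nil mulmx1.
Qed.

Lemma inW1 : in_Weyl Phi 1%:M.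
Proof. by exists [::]; split. Qed.

Lemma inW_orth w : in_Weyl Phi w -> w^T *m w = 1%:M /\ w *m w^T = 1%:M.
Proof. by case=> s [sP ->]; apply: word_orthP. Qed.

Lemma inW_root w a : in_Weyl Phi w -> a \in Phi -> w *m a \in Phi.
Proof. by case=> s [sP ->]; apply: word_root. Qed.

Lemma Delta_Phi s : {subset s <= Delta} -> {subset s <= Phi}.
Proof. by move=> sD y /sD; apply: Delta_sub. Qed.

Lemma inW_word s : {subset s <= Delta} -> in_Weyl Phi (word_mx s).
Proof. by move=> sD; exists s; split => //; apply: Delta_Phi. Qed.

Definition nn w : nat :=
  (\sum_(g <- undup Phi) nat_of_bool (pos g && pos (- (w *m g))))%N.

Lemma big_split2 (F : 'cV[R]_n -> nat) x y r : uniq r -> x \in r -> y \in r -> x != y ->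
  (\sum_(i <- r) F i = F x + F y + \sum_(i <- r | (i != x) && (i != y)) F i)%N.
Proof.
move=> ur xr yr xy; rewrite (bigD1_seq x) //= -big_filter (bigD1_seq y) //=.
- by rewrite big_filter_cond addnA.
- by rewrite mem_filter /= eq_sym xy.
- exact: filter_uniq.
Qed.

Lemma refl_perm b : b \in Phi ->
  perm_eq (undup Phi) (map (mulmx (refl_mx b)) (undup Phi)).
Proof.
move=> bP; apply: uniq_perm; first exact: undup_uniq.
  rewrite map_inj_uniq ?undup_uniq //.
  by apply: (can_inj (g := mulmx (refl_mx b))) => v; rewrite mulmxA refl_invol ?root_ne0 // mul1mx.
move=> v; rewrite mem_undup; apply/idP/mapP.
  move=> vP; exists (refl_mx b *m v); first by rewrite mem_undup refl_root.
  by rewrite mulmxA refl_invol ?root_ne0 // mul1mx.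
by case=> y; rewrite mem_undup => yP ->; rewrite refl_root.
Qed.

Lemma pos_refl_other b g : b \in Delta -> g \in Phi -> g != b -> g != - b ->
  pos (refl_mx b *m g) = pos g.
Proof.
move=> bD gP gb gnb; have bP := Delta_sub bD.
case pg: (pos g); first by apply: simple_perm.
have ng : pos (- g) by apply: root_notpos; rewrite ?pg.
have : pos (refl_mx b *m (- g)).
  apply: simple_perm => //; first exact: neg_root.
  by apply: contraNneq gnb => <-; rewrite opprK.
rewrite mulmxN => H; apply/negbTE; rewrite -[refl_mx b *m g]opprK.
by apply: root_neg => //; rewrite ?neg_root ?refl_root.
Qed.

Lemma n_step w b : b \in Delta ->
  (nn (w *m refl_mx b) + pos (- (w *m b)) = nn w + pos (w *m b))%N.
Proof.
move=> bD; have bP := Delta_sub bD.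
have b0 := root_ne0 bP.
have bnb : b != - b.
  apply: contraNneq b0 => /eqP; rewrite -subr_eq0 opprK -mulr2n -scaler_nat.
  by rewrite scaler_eq0 pnatr_eq0 orFb => /eqP ->.
rewrite /nn (perm_big _ (refl_perm bP)) big_map.
rewrite (eq_bigr (fun g => nat_of_bool (pos (refl_mx b *m g) && pos (-(w *m g))))); last first.
  by move=> g _; rewrite -mulmxA (mulmxA (refl_mx b)) (refl_invol b0) mul1mx.
have U : uniq (undup Phi) by exact: undup_uniq.
have bU : b \in undup Phi by rewrite mem_undup.
have nbU : - b \in undup Phi by rewrite mem_undup neg_root.
rewrite (@big_split2 (fun g => nat_of_bool (pos (refl_mx b *m g) && pos (-(w *m g)))) b (-b) _ U bU nbU bnb).
rewrite (@big_split2 (fun g => nat_of_bool (pos g && pos (-(w *m g)))) b (-b) _ U bU nbU bnb).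
rewrite !mulmxN (refl_self b0) !opprK.
have pb := pos_Delta bD.
have npb : ~~ pos (- b) by apply: root_neg.
rewrite pb (negPf npb) !andFb !andTb.
set S1 := (X in (_ + _ + X + _)%N = _).
set S2 := (X in _ = (_ + _ + X + _)%N).
suff -> : S1 = S2.
  by move: (nat_of_bool (pos (w *m b))) (nat_of_bool (pos (- (w *m b)))) S2 => p q s /=; lia.
rewrite /S1 /S2 (big_seq_cond (fun i => (i != b) && (i != - b)) (fun i => nat_of_bool (pos (refl_mx b *m i) && pos (-(w *m i))))).
rewrite (big_seq_cond (fun i => (i != b) && (i != - b)) (fun i => nat_of_bool (pos i && pos (-(w *m i))))).
apply: eq_bigr => g /andP[gU /andP[gb gnb]].
rewrite mem_undup in gU.
by rewrite pos_refl_other.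
Qed.


Lemma deletion b s : {subset s <= Delta} -> b \in Delta ->
  pos (- (word_mx s *m b)) ->
  exists s1 x s2, s = s1 ++ x :: s2 /\ word_mx (rcons s b) = word_mx (s1 ++ s2).
Proof.
move=> + bD; have bP := Delta_sub bD; have b0 := root_ne0 bP.
elim: s => [|x s IH] sD.
  by rewrite word_nil mul1mx => H; have := root_neg bP (pos_Delta bD); rewrite H.
have sD' : {subset s <= Delta} by move=> y ys; apply: sD; rewrite in_cons ys orbT.
have xD : x \in Delta by apply: sD; rewrite mem_head.
have uP : word_mx s *m b \in Phi by apply: word_root => //; apply: Delta_Phi.
case Hn: (pos (- (word_mx s *m b))) => H.
  have [s1 [y [s2 [E1 E2]]]] := IH sD' Hn.
  exists (x :: s1), y, s2; split; first by rewrite E1.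
  by rewrite rcons_cons word_cons E2 -word_cons.
have pu : pos (word_mx s *m b) by case/orP: (root_dich uP) => //; rewrite Hn.
have ux : word_mx s *m b = x.
  apply: (simple_neg xD uP pu); rewrite word_cons -mulmxA in H.
  rewrite -[refl_mx x *m _]opprK; apply: root_neg => //.
  by apply: neg_root; apply: refl_root => //; apply: Delta_sub.
exists [::], x, s; split => //.
have [O1 O2] := word_orthP (Delta_Phi sD').
rewrite rcons_cons word_cons word_rcons -ux refl_conj // /=.
rewrite -!mulmxA (mulmxA _ (word_mx s)) O1 mul1mx.
by rewrite refl_invol // mulmx1.
Qed.

Definition reduced s := {subset s <= Delta} /\
  forall s', {subset s' <= Delta} -> word_mx s' = word_mx s -> (size s <= size s')%N.

Lemma reduced_neg s b : reduced (rcons s b) -> pos (- (word_mx (rcons s b) *m b)).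
Proof.
case=> sD Hmin.
have bD : b \in Delta by apply: sD; rewrite mem_rcons mem_head.
have sD' : {subset s <= Delta} by move=> y ys; apply: sD; rewrite mem_rcons in_cons ys orbT.
have bP := Delta_sub bD; have b0 := root_ne0 bP.
rewrite word_rcons -mulmxA refl_self // mulmxN opprK.
have uP : word_mx s *m b \in Phi by apply: word_root => //; apply: Delta_Phi.
case/orP: (root_dich uP) => // Hn.
have [s1 [x [s2 [E1 E2]]]] := deletion sD' bD Hn.
have : (size (rcons s b) <= size (s1 ++ s2))%N.
  apply: Hmin => //; move=> y; rewrite mem_cat => Hy; apply: sD'.
  by rewrite E1 mem_cat in_cons; case/orP: Hy => ->; rewrite ?orbT.
by rewrite size_rcons E1 !size_cat /=; lia.
Qed.

Lemma reduced_prefix s b : reduced (rcons s b) -> reduced s.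
Proof.
case=> sD Hmin; split.
  by move=> y ys; apply: sD; rewrite mem_rcons in_cons ys orbT.
move=> s' s'D E.
have : (size (rcons s b) <= size (rcons s' b))%N.
  apply: Hmin; last by rewrite !word_rcons E.
  move=> y; rewrite mem_rcons in_cons => /orP[/eqP ->|/s'D //].
  by apply: sD; rewrite mem_rcons mem_head.
by rewrite !size_rcons.
Qed.

Lemma nn1 : nn 1%:M = 0%N.
Proof.
rewrite /nn big_seq big1 // => g; rewrite mem_undup mul1mx => gP.
by case pg: (pos g) => //=; rewrite (negPf (root_neg gP pg)).
Qed.

Lemma nn_le_size s : {subset s <= Delta} -> (nn (word_mx s) <= size s)%N.
Proof.
elim/last_ind: s => [|s b IH] sD; first by rewrite word_nil nn1.
have bD : b \in Delta by apply: sD; rewrite mem_rcons mem_head.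
have sD' : {subset s <= Delta} by move=> y ys; apply: sD; rewrite mem_rcons in_cons ys orbT.
have := n_step (word_mx s) bD; rewrite -word_rcons size_rcons.
have := IH sD'; case: (pos (word_mx s *m b)); case: (pos (- (word_mx s *m b))) => /=; lia.
Qed.

Lemma nn_reduced s : reduced s -> nn (word_mx s) = size s.
Proof.
elim/last_ind: s => [|s b IH] Hr; first by rewrite word_nil nn1.
have Hs := reduced_prefix Hr.
have Hneg := reduced_neg Hr.
case: Hr => sD _.
have bD : b \in Delta by apply: sD; rewrite mem_rcons mem_head.
have bP := Delta_sub bD; have b0 := root_ne0 bP.
have sD' : {subset s <= Delta} by case: Hs.
have uP : word_mx s *m b \in Phi by apply: word_root => //; apply: Delta_Phi.
move: Hneg; rewrite word_rcons -mulmxA refl_self // mulmxN opprK => pu.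
have npu := root_neg uP pu.
have := n_step (word_mx s) bD; rewrite pu (negPf npu) size_rcons -(IH Hs) /=; lia.
Qed.

Lemma exists_reduced s : {subset s <= Delta} ->
  exists s', reduced s' /\ word_mx s' = word_mx s.
Proof.
move=> sD; have [k Hk] : exists k, (size s <= k)%N by exists (size s).
elim: k => [|k IH] in s sD Hk *.
  by exists s; split => //; split => // s' _ _; move: Hk; rewrite leqn0 => /eqP ->.
case: (pselect (reduced s)) => Hr; first by exists s.
have : exists s', [/\ {subset s' <= Delta}, word_mx s' = word_mx s & (size s' < size s)%N].
  apply: contra_notP Hr => H; split => // s' s'D E.
  rewrite leqNgt; apply/negP => Hlt; apply: H; exists s'; split => //.
case=> s' [s'D E Hlt].
have [s'' [H1 H2]] := IH s' s'D (leq_trans Hlt Hk).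
by exists s''; rewrite H2 E.
Qed.

Lemma is_length_word s : {subset s <= Delta} -> is_length Delta (word_mx s) (nn (word_mx s)).
Proof.
move=> sD; have [s' [Hr E]] := exists_reduced sD; split.
  by exists s'; split; [case: Hr| split; [rewrite -E nn_reduced|]].
move=> s'' s''D E'; rewrite E' ; exact: nn_le_size.
Qed.

Lemma is_length_uniq w l1 l2 : is_length Delta w l1 -> is_length Delta w l2 -> l1 = l2.
Proof.
move=> [[s1 [D1 [S1 E1]]] H1] [[s2 [D2 [S2 E2]]] H2].
apply/eqP; rewrite eqn_leq; apply/andP; split; [rewrite -S2; apply: H1|rewrite -S1; apply: H2] => //.
Qed.

Lemma dot_sumr (I : Type) (r : seq I) (F : I -> 'cV[R]_n) u :
  dot u (\sum_(i <- r) F i) = \sum_(i <- r) dot u (F i).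
Proof.
elim: r => [|i r IH]; first by rewrite !big_nil dot0r.
by rewrite !big_cons dotDr IH.
Qed.

Lemma int_pos_nat (x : R) : x \is a Num.int -> 0 < x -> exists m : nat, x = m.+1%:R.
Proof.
move=> xi x0; have : x \is a Num.nat by rewrite natrEint xi ltW.
case/natrP => m xm; move: x0; rewrite xm; case: m xm => [|m] xm; first by rewrite ltxx.
by exists m.
Qed.

Lemma refl_W0_pos k g (c : 'cV[R]_n -> nat) : g \in Phi ->
  g = \sum_(d <- Delta) (c d)%:R *: d -> (\sum_(d <- Delta) c d <= k)%N ->
  exists s, {subset s <= Delta} /\ refl_mx g = word_mx s.
Proof.
elim: k => [|k IH] in g c *.
  move=> gP gE; rewrite leqn0 => /eqP Hs.
  have : g = 0.
    rewrite gE big_seq big1 // => d dD.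
    suff -> : c d = 0%N by rewrite scale0r.
    have : (c d <= \sum_(e <- Delta) c e)%N.
      by rewrite (bigD1_seq d) //= ?Delta_uniq // leq_addr.
    by rewrite Hs leqn0 => /eqP.
  by move=> g0; move: (root_ne0 gP); rewrite g0 eqxx.
move=> gP gE Hk.
case gD: (g \in Delta).
  exists [:: g]; split; first by move=> y; rewrite inE => /eqP ->.
  by rewrite word_cons word_nil mulmx1.
have g0 := root_ne0 gP.
have [b [bD Hb]] : exists b, b \in Delta /\ 0 < dot g b.
  apply: contrapT => H.
  have : dot g g <= 0.
    rewrite {2}gE dot_sumr big_seq; apply: (big_ind (fun x : R => x <= 0)) => //.
      by move=> x y x0 y0; lra.
    move=> d dD; rewrite dotZr; apply: mulr_ge0_le0 => //.
    rewrite leNgt; apply/negP => Hd; apply: H; exists d; split => //.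
  by rewrite leNgt dot_gt0.
have bP := Delta_sub bD; have b0 := root_ne0 bP.
have bb0 : 0 < dot b b by apply: dot_gt0.
have [m Hm] : exists m : nat, 2 * dot g b / dot b b = m.+1%:R.
  apply: int_pos_nat; first by case: HR => _ _ _ H _; apply: H.
  by rewrite divr_gt0 // mulr_gt0.
have g'P : refl_mx b *m g \in Phi by apply: refl_root.
have gb : g != b by apply: contraFneq gD => ->.
have pg : pos g by apply/posP; exists c.
case/posP: (simple_perm bD gP pg gb) => c' Ec'.
have g'E : refl_mx b *m g = g - m.+1%:R *: b by rewrite refl_act Hm.
have Ecoef : forall d, d \in Delta ->
    (c' d)%:R = (c d)%:R - (if d == b then m.+1%:R else 0) :> R.
  apply: uniq_coef; rewrite -Ec' g'E.
  rewrite (eq_bigr (fun d => (c d)%:R *: d - (if d == b then m.+1%:R else 0) *: d)).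
    rewrite sumrB -gE (@sum_single (fun d => if d == b then m.+1%:R else 0) b) ?eqxx //.
    by move=> e _ /negPf ->.
  by move=> d _; rewrite scalerBl.
have Hsum : (\sum_(d <- Delta) c' d + m.+1 = \sum_(d <- Delta) c d)%N.
  apply/eqP; rewrite -(eqr_nat R) natrD !natr_sum.
  rewrite big_seq (eq_bigr (fun d => (c d)%:R - (if d == b then m.+1%:R else 0))); last first.
    by move=> d dD; rewrite Ecoef.
  rewrite -big_seq sumrB.
  have -> : \sum_(i <- Delta) (if i == b then m.+1%:R else 0) = m.+1%:R :> R.
    rewrite (bigD1_seq b) //= ?Delta_uniq // eqxx big_seq_cond big1 ?addr0 //.
    by move=> d /andP[_ /negPf ->].
  by rewrite subrK.
have [s' [s'D Es']] := IH (refl_mx b *m g) c' g'P Ec' ltac:(lia).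
exists (b :: rcons s' b); split.
  move=> y; rewrite in_cons mem_rcons in_cons orbA orbb => /orP[/eqP -> //|]; exact: s'D.
have -> : g = refl_mx b *m (refl_mx b *m g) by rewrite mulmxA refl_invol // mul1mx.
rewrite refl_conj ?refl_tr ?refl_invol // Es' word_cons word_rcons mulmxA //.
Qed.

Lemma refl_W0 g : g \in Phi -> exists s, {subset s <= Delta} /\ refl_mx g = word_mx s.
Proof.
move=> gP.
wlog pg : g gP / pos g.
  move=> Hw; case pg: (pos g); first exact: Hw.
  rewrite -refl_N; apply: Hw; first exact: neg_root.
  by apply: root_notpos; rewrite ?pg.
case/posP: pg => c Ec.
exact: (refl_W0_pos gP Ec (leqnn _)).
Qed.

Lemma inW_W0 w : in_Weyl Phi w -> exists s, {subset s <= Delta} /\ w = word_mx s.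
Proof.
case=> t [tP ->]; elim: t tP => [|a t IH] tP; first by exists [::].
have aP : a \in Phi by apply: tP; rewrite mem_head.
have [s1 [s1D E1]] := refl_W0 aP.
have [s2 [s2D E2]] : exists s, {subset s <= Delta} /\ word_mx t = word_mx s.
  by apply: IH => y yt; apply: tP; rewrite in_cons yt orbT.
exists (s1 ++ s2); split; last by rewrite word_cons E1 E2 word_cat.
by move=> y; rewrite mem_cat => /orP[/s1D|/s2D].
Qed.

Lemma is_length_W w : in_Weyl Phi w -> is_length Delta w (nn w).
Proof. by case/inW_W0 => s [sD ->]; apply: is_length_word. Qed.

Lemma nn_tr w : in_Weyl Phi w -> nn w^T = nn w.
Proof.
move=> wW; apply: (is_length_uniq (w := w^T)); first exact/is_length_W/inW_tr.
case: (is_length_W wW) => [[s [sD [Ss Es]]] Hmin]; split.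
  exists (rev s); split; first by move=> y; rewrite mem_rev; apply: sD.
  by rewrite size_rev Ss Es word_tr.
move=> s' s'D E; rewrite -size_rev; apply: Hmin.
  by move=> y; rewrite mem_rev; apply: s'D.
by rewrite -word_tr -E trmxK.
Qed.

Lemma nn_eq0 w : in_Weyl Phi w -> nn w = 0%N -> w = 1%:M.
Proof.
move=> wW H; case: (is_length_W wW) => [[s [sD [Ss Es]]] _].
by move: Ss; rewrite H Es => /size0nil ->.
Qed.

Lemma nn_bound w : (nn w <= size (undup Phi))%N.
Proof.
rewrite /nn -sum1_size; apply: leq_sum => g _; by case: (_ && _).
Qed.



Variables (theta alpha : 'cV[R]_n).
Hypothesis HI : irreducible_rs Phi.
Hypothesis Hth : highest_root Phi Delta theta.
Hypothesis Ha : alpha \in Phi.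
Hypothesis HL : dot alpha alpha = dot theta theta.

Lemma thP : theta \in Phi.
Proof. by case: Hth. Qed.

Lemma L_gt0 : 0 < dot theta theta.
Proof. exact/dot_gt0/root_ne0/thP. Qed.

Lemma orbit_nonorth : exists w, in_Weyl Phi w /\ dot (w *m alpha) theta != 0.
Proof.
pose P := fun g : 'cV[R]_n => `[< forall w, in_Weyl Phi w -> dot (w *m alpha) g = 0 >].
have HP : forall a b, a \in Phi -> b \in Phi -> P a -> ~~ P b -> dot a b = 0.
  move=> a b aP bP /asboolP Pa nPb; apply: contrapT => Hab.
  apply: (negP nPb); apply/asboolP => w wW.
  case: (eqVneq (dot (w *m alpha) b) 0) => // H; exfalso; apply: Hab.
  have H1 := Pa w wW.
  have H2 := Pa _ (inW_mul (inW_refl bP) wW).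
  move: H2; rewrite -mulmxA refl_act dotBl dotZl H1 sub0r => /eqP.
  rewrite oppr_eq0 mulf_eq0 => /orP[|/eqP]; last by rewrite dotC.
  have bb : dot b b != 0 by rewrite gt_eqF // dot_gt0 // root_ne0.
  by rewrite !mulf_eq0 invr_eq0 (negPf bb) (negPf H) orbF pnatr_eq0.
case: (HI HP) => /allP H.
  have := H alpha Ha; move/asboolP => /(_ _ inW1); rewrite mul1mx => /eqP.
  by rewrite (gt_eqF (dot_gt0 (root_ne0 Ha))).
have := H theta thP; rewrite /= => /asboolPn nP.
apply: contrapT => Hn; apply: nP => w wW; apply: contrapT => Hne.
by apply: Hn; exists w; split => //; apply/eqP.
Qed.

Lemma conj1 g : dot g g = dot theta theta -> 2 * dot g theta = dot theta theta ->
  refl_mx (refl_mx theta *m g) *m g = theta.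
Proof.
move=> Hg Hgt; have L0 := L_gt0; set L := dot theta theta in Hg Hgt L0.
have -> : refl_mx theta *m g = g - theta.
  by rewrite refl_act Hgt divff ?gt_eqF // scale1r.
rewrite refl_act !dotBl !dotBr Hg (dotC theta g).
have -> : 2 * (L - dot g theta) / (L - dot g theta - (dot g theta - L)) = 1.
  rewrite -Hgt; field; rewrite Hgt gt_eqF //.
  by rewrite -Hgt; lra.
by rewrite scale1r opprB addrCA subrr addr0.
Qed.

Lemma conj_exists : exists w, in_Weyl Phi w /\ w *m alpha = theta.
Proof.
have [w [wW Hw]] := orbit_nonorth.
have L0 := L_gt0.
set g := w *m alpha in Hw.
have gP : g \in Phi by apply: inW_root.
have [O1 O2] := inW_orth wW.
have Hg : dot g g = dot theta theta by rewrite /g dot_mul mulmxA O1 mul1mx.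
have : 2 * dot g theta / dot theta theta \is a Num.int.
  by case: HR => _ _ _ H _; apply: H => //; apply: thP.
case/intrP => z Hz.
set L := dot theta theta in Hg Hz L0.
have Hgt : dot g theta = z%:~R * L / 2 by rewrite -Hz; field; rewrite gt_eqF.
have Hz2 : (z * z <= 4)%R.
  have := dot_ge0 (g - (z%:~R / 2) *: theta).
  rewrite !dotBl !dotBr !dotZl !dotZr Hg (dotC theta g) Hgt -/L => H.
  have : (z%:~R * z%:~R : R) <= 4 by nra.
  by rewrite -intrM (_ : 4 = 4%:~R) // ler_int.
have zn0 : z != 0.
  by apply: contraNneq Hw => z0; rewrite Hgt z0 mul0r mul0r.
have [z2|[zm2|[z1|zm1]]] : z = 2 \/ z = -2 \/ z = 1 \/ z = -1 by lia.
- exists w; split => //; apply/eqP; rewrite -subr_eq0; apply/eqP/dot_eq0.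
  rewrite !dotBl !dotBr Hg (dotC theta g) Hgt z2 -/L; lra.
- exists (refl_mx theta *m w); split; first exact: inW_mul (inW_refl thP) wW.
  rewrite -mulmxA; have -> : w *m alpha = - theta.
    apply/eqP; rewrite -subr_eq0 opprK; apply/eqP/dot_eq0.
    rewrite !dotDl !dotDr -/g Hg (dotC theta g) Hgt zm2 -/L; lra.
  by rewrite mulmxN refl_self ?opprK // root_ne0 // thP.
- have dP : refl_mx theta *m g \in Phi by apply: refl_root => //; apply: thP.
  exists (refl_mx (refl_mx theta *m g) *m w); split.
    exact: inW_mul (inW_refl dP) wW.
  by rewrite -mulmxA -/g conj1 // Hgt z1 -/L; field.
- have g'P : - g \in Phi by apply: neg_root.
  have dP : refl_mx theta *m (- g) \in Phi by apply: refl_root => //; apply: thP.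
  exists (refl_mx (refl_mx theta *m (- g)) *m (refl_mx g *m w)); split.
    exact: inW_mul (inW_refl dP) (inW_mul (inW_refl gP) wW).
  rewrite -!mulmxA -/g refl_self ?root_ne0 // conj1 //.
    by rewrite dotNl dotNr opprK.
  by rewrite dotNl Hgt zm1 -/L; field.
Qed.

Definition Sx w := in_Weyl Phi w /\ w *m alpha = theta.
Definition Top w := forall b, b \in Delta -> dot theta b = 0 -> pos (- (w^T *m b)).

Lemma dom_simple b : b \in Delta -> 0 <= dot theta b.
Proof.
move=> bD; have bP := Delta_sub bD; have b0 := root_ne0 bP.
have bb0 : 0 < dot b b by apply: dot_gt0.
rewrite leNgt; apply/negP => Hneg.
case: Hth => _ /(_ _ (refl_root bP thP)) [c Ec].
set k := 2 * dot theta b / dot b b in Ec.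
have k0 : k < 0 by rewrite /k pmulr_llt0 ?invr_gt0 // pmulr_rlt0.
move: Ec; rewrite refl_act -/k opprB addrCA subrr addr0 => Ec.
have E2 : \sum_(d <- Delta) (if d == b then k else 0) *: d = \sum_(d <- Delta) (c d)%:R *: d.
  by rewrite -Ec (@sum_single (fun d => if d == b then k else 0) b) ?eqxx // => e _ /negPf ->.
have := uniq_coef E2 bD; rewrite eqxx => H.
have : (0 : R) <= (c b)%:R by apply: ler0n.
by rewrite -H leNgt k0.
Qed.

Lemma sum_ge0_eq0 (F : 'cV[R]_n -> R) d : (forall e, e \in Delta -> 0 <= F e) ->
  \sum_(e <- Delta) F e = 0 -> d \in Delta -> F d = 0.
Proof.
move=> H0 Hs dD; apply/eqP; rewrite eq_le H0 // andbT.
rewrite -Hs (bigD1_seq d) //= ?Delta_uniq // lerDl big_seq_cond sumr_ge0 //.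
by move=> e /andP[eD _]; apply: H0.
Qed.

Lemma dom_pos g : pos g -> 0 <= dot theta g.
Proof.
case/posP => c ->; rewrite dot_sumr big_seq sumr_ge0 // => d dD.
by rewrite dotZr mulr_ge0 // dom_simple.
Qed.

Lemma TopExt (u : 'M[R]_n) g : Top u -> pos g -> dot theta g = 0 -> pos (- (u^T *m g)).
Proof.
move=> Hu /posP[c Ec] Hg.
have Hz : forall d, d \in Delta -> (c d)%:R * dot theta d = 0.
  move=> d dD; apply: (@sum_ge0_eq0 (fun e => (c e)%:R * dot theta e)) => //.
    by move=> e eD; rewrite mulr_ge0 // dom_simple.
  apply: (etrans _ Hg); rewrite [in RHS]Ec dot_sumr; apply: eq_bigr => e _; by rewrite dotZr.
rewrite Ec mulmx_sumr -sumrN; apply: pos_sum => d dD.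
rewrite -scalemxAr -scalerN.
have := Hz d dD; move/eqP; rewrite mulf_eq0 => /orP[/eqP ->|/eqP Hd].
  by rewrite scale0r pos0.
by apply: posZ; apply: Hu.
Qed.

Lemma reduced_of_length w : in_Weyl Phi w -> w != 1%:M ->
  exists s b, reduced (rcons s b) /\ w = word_mx (rcons s b).
Proof.
move=> wW w1; case: (is_length_W wW) => [[s [sD [Ss Es]]] Hmin].
case/lastP: s sD Ss Es => [|s b] sD Ss Es; first by move: w1; rewrite Es word_nil eqxx.
exists s, b; split => //; split => // s' s'D E.
by rewrite Ss; apply: Hmin => //; rewrite E.
Qed.

Lemma top_unique (u v : 'M[R]_n) : Sx u -> Sx v -> Top u -> Top v -> u = v.
Proof.
move=> [uW uE] [vW vE] Tu Tv.
have [Ou1 Ou2] := inW_orth uW.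
have [Ov1 Ov2] := inW_orth vW.
set x := v *m u^T.
have xW : in_Weyl Phi x by apply: inW_mul => //; apply: inW_tr.
have [Ox1 Ox2] := inW_orth xW.
have uta : u^T *m theta = alpha by rewrite -uE mulmxA Ou1 mul1mx.
have xth : x *m theta = theta by rewrite /x -mulmxA uta vE.
have xv : x *m u = v by rewrite /x -mulmxA Ou1 mulmx1.
case: (eqVneq x 1%:M) => [x1|x1].
  by rewrite -xv x1 mul1mx.
exfalso.
have xTW := inW_tr xW.
have xT1 : x^T != 1%:M by apply: contraNneq x1 => H; rewrite -(trmxK x) H trmx1.
have [s [b [Hr Es]]] := reduced_of_length xTW xT1.
have bD : b \in Delta by case: Hr => sD _; apply: sD; rewrite mem_rcons mem_head.
have bP := Delta_sub bD.
have Hneg := reduced_neg Hr; rewrite -Es in Hneg.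
set g := - (x^T *m b) in Hneg.
have gP : g \in Phi by apply: neg_root; apply: inW_root.
have xTth : x^T *m theta = theta by rewrite -{1}xth mulmxA Ox1 mul1mx.
have Htb : dot theta b = - dot theta g.
  by rewrite /g dotNr opprK dot_mulr trmxK xth.
have Hb0 : dot theta b = 0.
  apply/eqP; rewrite eq_le dom_simple // andbT Htb oppr_le0; exact: dom_pos.
have Hg0 : dot theta g = 0 by apply/eqP; rewrite -oppr_eq0 -Htb Hb0.
have H1 := TopExt Tu Hneg Hg0.
have H2 := Tv b bD Hb0.
have : v^T *m b = - (u^T *m g).
  by rewrite /g -xv trmx_mul mulmxN opprK mulmxA.
move=> E; rewrite E opprK in H2.
have ugP : u^T *m g \in Phi by apply: inW_root => //; apply: inW_tr.
by move: (root_neg ugP H2); rewrite H1.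
Qed.

Lemma up_step w b : Sx w -> b \in Delta -> dot theta b = 0 -> ~~ pos (- (w^T *m b)) ->
  [/\ Sx (refl_mx b *m w), nn (refl_mx b *m w) = (nn w).+1 &
      bruhat_step Phi Delta w (refl_mx b *m w)].
Proof.
move=> [wW wE] bD Hb Hn.
have bP := Delta_sub bD.
have wTW := inW_tr wW.
have gP : w^T *m b \in Phi by apply: inW_root.
have pg : pos (w^T *m b) by rewrite -[w^T *m b]opprK; apply: root_notpos => //; apply: neg_root.
have w'W : in_Weyl Phi (refl_mx b *m w) by apply: inW_mul => //; apply: inW_refl.
have Hnn : nn (refl_mx b *m w) = (nn w).+1.
  rewrite -(nn_tr w'W) trmx_mul refl_tr.
  by have := n_step w^T bD; rewrite pg (negPf Hn) (nn_tr wW) /= addn0 addn1.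
split => //.
  split => //; rewrite -mulmxA wE refl_act (dotC theta b) in Hb *.
  by rewrite Hb mulr0 mul0r scale0r subr0.
exists (w^T *m b); split => //; split.
  have [O1 O2] := inW_orth wW.
  by rewrite refl_conj ?trmxK // mulmxA mulmxA O2 mul1mx.
exists (nn w), (nn (refl_mx b *m w)); split; [exact: is_length_W|exact: is_length_W|].
by rewrite Hnn.
Qed.

Lemma notTop w : ~ Top w ->
  exists b, [/\ b \in Delta, dot theta b = 0 & ~~ pos (- (w^T *m b))].
Proof.
move=> H; apply: contrapT => H'; apply: H => b bD Hb.
apply: contrapT => Hn; apply: H'; exists b; split => //; exact/negP.
Qed.

Lemma top_exists : exists w, Sx w /\ Top w.
Proof.
have [w0 Hw0] := conj_exists.
suff : forall k w, Sx w -> (size (undup Phi) - nn w <= k)%N -> exists w, Sx w /\ Top w.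
  by apply; first exact: Hw0.
elim=> [|k IH] w Sw Hk.
  exists w; split => //; apply: contrapT => /notTop [b [bD Hb Hn]].
  have [_ Hnn _] := up_step Sw bD Hb Hn.
  have := nn_bound (refl_mx b *m w); rewrite Hnn; lia.
case: (pselect (Top w)) => [Tw|/notTop [b [bD Hb Hn]]]; first by exists w.
have [S' Hnn _] := up_step Sw bD Hb Hn.
apply: (IH _ S'); rewrite Hnn.
have := nn_bound (refl_mx b *m w); rewrite Hnn; lia.
Qed.

Lemma all_le_top (wt u : 'M[R]_n) : Sx wt -> Top wt -> Sx u -> bruhat_le Phi Delta u wt.
Proof.
move=> St Tt.
suff : forall k (u : 'M[R]_n), Sx u -> (size (undup Phi) - nn u <= k)%N -> bruhat_le Phi Delta u wt.
  by move=> H Su; apply: (H _ u Su (leqnn _)).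
elim=> [|k IH] {}u Su Hk.
  case: (pselect (Top u)) => [Tu|/notTop [b [bD Hb Hn]]].
    by rewrite (top_unique Su St Tu Tt); apply: rt_refl.
  have [_ Hnn _] := up_step Su bD Hb Hn.
  have := nn_bound (refl_mx b *m u); rewrite Hnn; lia.
case: (pselect (Top u)) => [Tu|/notTop [b [bD Hb Hn]]].
  by rewrite (top_unique Su St Tu Tt); apply: rt_refl.
have [S' Hnn Hst] := up_step Su bD Hb Hn.
apply: rt_trans (rt_step _ _ _ _ Hst) (IH _ S' _).
have := nn_bound (refl_mx b *m u); rewrite Hnn; lia.
Qed.

Lemma bruhat_len (a b : 'M[R]_n) : bruhat_le Phi Delta a b -> a = b \/
  exists la lb, [/\ is_length Delta a la, is_length Delta b lb & (la < lb)%N].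
Proof.
elim => [x y [g [_ [_ [lx [ly [H1 H2 H3]]]]]]| x | x y z _ IH1 _ IH2].
- by right; exists lx, ly.
- by left.
case: IH1 => [->|[l1 [l2 [A1 A2 A3]]]]; first by [].
case: IH2 => [<-|[l3 [l4 [B1 B2 B3]]]]; first by right; exists l1, l2.
right; exists l1, l4; split => //.
by rewrite (is_length_uniq A2 B1) in A3; apply: ltn_trans A3 B3.
Qed.

Lemma invmx_W w : in_Weyl Phi w -> invmx w = w^T.
Proof.
move=> wW; have [O1 O2] := inW_orth wW.
have [wu _] := mulmx1_unit O2.
by rewrite -[invmx w]mulmx1 -O2 mulmxA mulVmx // mul1mx.
Qed.

Lemma S_equiv w : (in_Weyl Phi w /\ invmx w *m theta = alpha) <-> Sx w.
Proof.
split => -[wW E]; split => //; have [O1 O2] := inW_orth wW.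
  by rewrite -E invmx_W // mulmxA O2 mul1mx.
by rewrite invmx_W // -E mulmxA O1 mul1mx.
Qed.

Lemma main_sec :
  let S := fun w : 'M[R]_n => in_Weyl Phi w /\ invmx w *m theta = alpha in
  let maximal := fun w => S w /\ (forall u : 'M[R]_n, S u -> bruhat_le Phi Delta w u -> u = w) in
  exists w, maximal w /\ (forall w', maximal w' -> w' = w).
Proof.
move=> S maximal.
have [wt [St Tt]] := top_exists.
have SE : forall w, S w <-> Sx w by move=> w; apply: S_equiv.
have Hle : forall u : 'M[R]_n, S u -> bruhat_le Phi Delta u wt.
  by move=> u /SE Su; apply: all_le_top.
exists wt; split.
  split; first exact/SE.
  move=> u Su Hwu; have Huw := Hle u Su.
  case: (bruhat_len Hwu) => [//|[l1 [l2 [A1 A2 A3]]]].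
  case: (bruhat_len Huw) => [//|[l3 [l4 [B1 B2 B3]]]].
  rewrite (is_length_uniq A1 B2) (is_length_uniq A2 B1) in A3.
  by have := ltn_trans A3 B3; rewrite ltnn.
move=> w' [Sw' Hmax]; apply: Logic.eq_sym; apply: Hmax; first exact/SE.
exact: Hle.
Qed.

End RS.

Theorem mainTheorem13 (R : realType) (n : nat) (Phi Delta : seq 'cV[R]_n)
    (theta alpha : 'cV[R]_n) :
  is_root_system Phi -> irreducible_rs Phi -> is_base Phi Delta ->
  highest_root Phi Delta theta ->
  alpha \in Phi -> dot alpha alpha = dot theta theta ->
  let S := fun w : 'M[R]_n => in_Weyl Phi w /\ invmx w *m theta = alpha in
  let maximal := fun w => S w /\ (forall u, S u -> bruhat_le Phi Delta w u -> u = w) in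
  exists w, maximal w /\ (forall w', maximal w' -> w' = w).
Proof.
move=> HR HI HB Hth Ha HL; exact: (main_sec HR HB HI Hth Ha HL).
Qed.
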